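(* Let $G$ be a finite group and $H$ a subgroup such that $\mathcal{O}_G(H)$ is Boolean of rank $\ell$, with atoms $A_1,\ldots,A_\ell$. If $|A_i:H|\ge2^i$ for each $i\in\{1,\ldots,\ell\}$, then $\hat\varphi(H,G)\ge2^{\ell-1}$.
   Context: $\mathcal{O}_G(H)=\{K\mid H\le K\le G\}$; Boolean of rank $\ell$ means isomorphic to the lattice of subsets of an $\ell$-set; atoms are the minimal elements of $\mathcal{O}_G(H)\setminus\{H\}$. The dual Euler totient is $\hat\varphi(H,G)=\sum_{K\in\mathcal{O}_G(H)}\mu(H,K)|G:K|$ where $\mu$ is the Möbius function of $\mathcal{O}_G(H)$. *)

(* Defs.v *)
From mathcomp Require Import all_boot all_order all_algebra all_fingroup.
Set Implicit Arguments. Unset Strict Implicit. Unset Printing Implicit Defensive.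
Import GRing.Theory Num.Theory.
Open Scope group_scope.

Section Defs.
Variable gT : finGroupType.

Definition overgroups (H G : {group gT}) : {set {group gT}} :=
  [set K : {group gT} | (H \subset K) && (K \subset G)].

Definition boolean_of_rank (H G : {group gT}) (l : nat) : Prop :=
  exists f : {set 'I_l} -> {group gT},
    [/\ forall X, f X \in overgroups H G,
        forall K, K \in overgroups H G -> exists X, f X = K
      & forall X Y, (f X \subset f Y) = (X \subset Y)].

Definition is_atom (H G K : {group gT}) : Prop :=
  [/\ K \in overgroups H G, K != H &
      forall L : {group gT}, L \in overgroups H G -> L != H ->
        L \subset K -> L = K].

(* Moebius function mu(H, K) of the subgroup poset, by the standard
   recursion mu(H,H) = 1, mu(H,K) = - sum_{H <= L < K} mu(H,L);
   the fuel n bounds the recursion depth (orders strictly decrease). *)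
Fixpoint mobius_rec (n : nat) (H K : {group gT}) : int :=
  match n with
  | 0 => 0
  | n'.+1 =>
      if K == H then 1
      else if H \subset K then
        - \sum_(L : {group gT} | (H \subset L) && (L \proper K))
            mobius_rec n' H L
      else 0
  end%R.

Definition mobius (H K : {group gT}) : int := mobius_rec #|K|.+1 H K.

Definition dual_totient (H G : {group gT}) : int :=
  (\sum_(K in overgroups H G) mobius H K * (#|G : K|)%:Z)%R.

End Defs.

(* Main.v *)
Require Import Defs.
From mathcomp Require Import all_boot all_order all_algebra all_fingroup.
From mathcomp Require Import zify ring lra.
Module CombM.
Set Implicit Arguments. Unset Strict Implicit. Unset Printing Implicit Defensive.
Import GRing.Theory Num.Theory.
Local Open Scope ring_scope.

Lemma alt_sum (T : finType) (X : {set T}) : X != set0 ->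
  \sum_(Y : {set T} | Y \subset X) (-1) ^+ #|Y| = 0 :> int.
Proof.
case/set0Pn=> x xX.
rewrite (bigID (fun Y : {set T} => x \in Y)) /=.
rewrite (reindex_onto (fun Z => x |: Z) (fun Y => Y :\ x)); last first.
  by move=> Y /andP[_ xY]; rewrite setD1K.
set S1 := (X in X + _); set S2 := (X in _ + X).
suff -> : S1 = - S2 by rewrite addNr.
rewrite /S1 /S2 -sumrN; apply: eq_big.
  move=> Z; rewrite setU11 andbT.
  apply/andP/andP.
    case=> sub /eqP eZ; split; last by rewrite -eZ setD11.
    by apply: subset_trans sub; apply: subsetUr.
  case=> sub xZ; split; first by rewrite subUset sub1set xX sub.
  by rewrite setU1K.
move=> Z /andP[_ /eqP eZ].
have xZ : x \notin Z by rewrite -eZ setD11.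
by rewrite cardsU1 xZ exprS mulN1r.
Qed.

Section CombL.
Variable l : nat.
Variable n : {set 'I_l} -> int.
Hypothesis n_ge1 : forall X, 1 <= n X.
Hypothesis n_step : forall (X : {set 'I_l}) (j : 'I_l), j \notin X -> 2 ^+ j.+1 * n (j |: X) <= n X.

Definition lows (m : nat) : {set 'I_l} := [set i : 'I_l | (i < m)%N].
Definition Fm (m : nat) (X : {set 'I_l}) : int :=
  \sum_(Z : {set 'I_l} | Z \subset lows m) (-1) ^+ #|Z| * n (X :|: Z).

Lemma Fm0 (X : {set 'I_l}) : Fm 0 X = n X.
Proof.
rewrite /Fm (eq_bigl (fun Z => Z == set0)); last first.
  have -> : lows 0 = set0 by apply/setP=> i; rewrite !inE.
  by move=> Z; rewrite subset0.
by rewrite big_pred1_eq cards0 expr0 mul1r setU0.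
Qed.

Lemma FmS m (j : 'I_l) (X : {set 'I_l}) : nat_of_ord j = m ->
  Fm m.+1 X = Fm m X - Fm m (j |: X).
Proof.
move=> jm.
have lowsS : lows m.+1 = j |: lows m.
  by apply/setP=> i; rewrite !inE ltnS leq_eqVlt -val_eqE /= jm.
have jl : j \notin lows m by rewrite inE jm ltnn.
rewrite /Fm (bigID (fun Z : {set 'I_l} => j \in Z)) /= addrC.
congr (_ + _).
  apply: eq_bigl => Z; rewrite lowsS.
  apply/andP/idP.
    case=> sub jZ; apply/subsetP=> i iZ.
    have := subsetP sub i iZ; rewrite !inE; case/orP=> // /eqP eij.
    by move: jZ; rewrite -eij iZ.
  move=> sub; split; first by apply: subset_trans sub (subsetUr _ _).
  by apply: contra jl => jZ; apply: (subsetP sub).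
rewrite (reindex_onto (fun Z => j |: Z) (fun Y => Y :\ j)); last first.
  by move=> Y /andP[_ jY]; rewrite setD1K.
rewrite -sumrN; apply: eq_big.
  move=> Z; rewrite setU11 andbT lowsS.
  apply/andP/idP.
    case=> sub /eqP eZ.
    have jZ : j \notin Z by rewrite -eZ setD11.
    apply/subsetP=> i iZ.
    have := subsetP sub i; rewrite !inE iZ orbT => /(_ isT); case/orP=> // /eqP eij.
    by move: jZ; rewrite -eij iZ.
  move=> sub; split; first by rewrite setUS.
  have jZ : j \notin Z by apply: contra jl => jZ; apply: (subsetP sub).
  by rewrite setU1K.
move=> Z /andP[_ /eqP eZ].
have jZ : j \notin Z by rewrite -eZ setD11.
rewrite cardsU1 jZ exprS mulN1r mulNr; congr (- (_ * n _)).
by rewrite setUA [X :|: _]setUC.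
Qed.

Lemma Fm_bounds m : (m <= l)%N -> forall X : {set 'I_l}, (forall i, i \in X -> (m <= i)%N) ->
  n X <= 2 ^+ m * Fm m X /\ Fm m X <= n X.
Proof.
elim: m => [|m IH] ml X HX.
  by rewrite Fm0 expr0 mul1r; split; apply: Order.POrderTheory.lexx.
pose j : 'I_l := Ordinal ml.
have jX : j \notin X by apply/negP=> /HX /=; rewrite ltnn.
rewrite (FmS X (erefl : nat_of_ord j = m)).
have [h1 h2] := IH (ltnW ml) X (fun i iX => ltnW (HX i iX)).
have HjX : forall i, i \in j |: X -> (m <= i)%N.
  by move=> i; rewrite !inE => /orP[/eqP -> //| /HX /ltnW].
have [h3 h4] := IH (ltnW ml) _ HjX.
have h5 := n_step jX.
have h6 := n_ge1 (j |: X).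
have p0 : 0 < 2 ^+ m :> int by rewrite exprn_gt0.
move: h5; rewrite exprS /= -mulrA => h5.
set p := 2 ^+ m : int in p0 h1 h3 h5 *.
split; nia.
Qed.

Lemma lows0 : lows 0 = set0.
Proof. by apply/setP=> i; rewrite !inE. Qed.

Lemma chain k : (k <= l)%N -> 4 ^+ k * n (lows k) <= 2 * n set0.
Proof.
elim: k => [|k IH] kl.
  by rewrite lows0 expr0 mul1r; have := n_ge1 set0; lia.
pose j : 'I_l := Ordinal kl.
have lowsS : lows k.+1 = j |: lows k.
  by apply/setP=> i; rewrite !inE ltnS leq_eqVlt -val_eqE.
have jl : j \notin lows k by rewrite inE ltnn.
have h := n_step jl; rewrite -lowsS /= in h.
have IH' := IH (ltnW kl).
have h1 := n_ge1 (lows k.+1).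
rewrite exprS.
have [k0|kpos] := posnP k.
  rewrite k0 lows0 expr0 mul1r in IH' h *.
  rewrite expr1 in h; lia.
have e4 : 4 <= 2 ^+ k.+1 :> int.
  case: (k) kpos => // k' _.
  have : 1 <= 2 ^+ k' :> int by rewrite exprn_ege1.
  by rewrite !exprS; lia.
set q := 2 ^+ k.+1 : int in e4 h.
set r := 4 ^+ k : int in IH' *.
have r0 : 0 < r by rewrite exprn_gt0.
nia.
Qed.

Lemma comb_main : 2 ^+ l <= 2 * \sum_(X : {set 'I_l}) (-1) ^+ #|X| * n X.
Proof.
have lowsT : lows l = setT by apply/setP=> i; rewrite !inE ltn_ord.
have H0 : forall i : 'I_l, i \in set0 -> (l <= i)%N by move=> i; rewrite inE.
have [b1 _] := @Fm_bounds l (leqnn l) set0 H0.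
have e : Fm l set0 = \sum_(X : {set 'I_l}) (-1) ^+ #|X| * n X.
  by rewrite /Fm lowsT; apply: eq_big => [Z|Z _]; rewrite ?subsetT ?set0U.
rewrite e in b1.
have c := chain (leqnn l); rewrite lowsT in c.
have h1 := n_ge1 setT.
set S := \sum_(X : {set 'I_l}) _ in b1 *.
have p0 : 0 < 2 ^+ l :> int by rewrite exprn_gt0.
have e4 : 4 ^+ l = 2 ^+ l * 2 ^+ l :> int by rewrite -exprMn.
rewrite e4 in c.
set p := 2 ^+ l : int in p0 b1 c *.
nia.
Qed.

End CombL.
End CombM.
Import CombM.
Module GrpM.
Set Implicit Arguments. Unset Strict Implicit. Unset Printing Implicit Defensive.
Import GRing.Theory Num.Theory.

Lemma Posz_exp2 k : ((2 ^ k)%N%:Z = 2 ^+ k :> int)%R.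
Proof. by elim: k => //= k IH; rewrite expnS PoszM IH exprS. Qed.

Section Grp.
Variables (gT : finGroupType) (G H : {group gT}) (l : nat).
Variable f : {set 'I_l} -> {group gT}.
Hypothesis HG : H \subset G.
Hypothesis f1 : forall X, f X \in overgroups H G.
Hypothesis f2 : forall K, K \in overgroups H G -> exists X, f X = K.
Hypothesis f3 : forall X Y, (f X \subset f Y) = (X \subset Y).

Lemma ovP (K : {group gT}) : (K \in overgroups H G) = (H \subset K) && (K \subset G).
Proof. by rewrite /overgroups inE. Qed.

Lemma f_inj : injective f.
Proof. by move=> X Y e; apply/eqP; rewrite eqEsubset -!f3 e subxx. Qed.

Lemma f0 : f set0 = H.
Proof.
have hO : H \in overgroups H G by rewrite ovP subxx HG.
have [Y0 eY0] := f2 hO.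
apply/group_inj/eqP; rewrite eqEsubset.
have := f1 set0; rewrite ovP => /andP[-> _].
by rewrite -eY0 f3 sub0set.
Qed.

Definition g (L : {group gT}) : {set 'I_l} := odflt set0 [pick Y | f Y == L].

Lemma fg L : L \in overgroups H G -> f (g L) = L.
Proof.
move=> hL; rewrite /g; case: pickP => [Y /eqP //|none].
by have [Y eY] := f2 hL; have := none Y; rewrite eY eqxx.
Qed.

Lemma gf Y : g (f Y) = Y.
Proof.
rewrite /g; case: pickP => [Z /eqP /f_inj //| none].
by have := none Y; rewrite eqxx.
Qed.

Lemma mob_fuel n m (L : {group gT}) : (#|L| < n)%N -> (#|L| < m)%N ->
  mobius_rec n H L = mobius_rec m H L.
Proof.
elim: n m L => [|n IH] [|m] L hn hm //=.
case: ifP => // _; case: ifP => // _.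
congr (- _)%R; apply: eq_bigr => L' /andP[_ pL'].
have := proper_card pL' => c.
by apply: IH; lia.
Qed.

Lemma mobiusE (K : {group gT}) : mobius H K =
  (if K == H then 1 else if H \subset K then
    - \sum_(L : {group gT} | (H \subset L) && (L \proper K)) mobius H L else 0)%R.
Proof.
rewrite /mobius /=.
case: ifP => // _; case: ifP => // _.
congr (- _)%R; apply: eq_bigr => L /andP[_ pL].
have := proper_card pL => c.
exact: (@mob_fuel _ _ L c (ltnSn _)).
Qed.

Lemma mob_f X : mobius H (f X) = ((-1) ^+ #|X|)%R.
Proof.
have [k] := ubnP #|X|; elim: k X => // k IH X.
rewrite ltnS => Xk.
rewrite mobiusE.
have [->|X0] := eqVneq X set0.
  by rewrite f0 eqxx cards0.
have -> : (f X == H) = false.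
  by apply/negbTE; apply: contra X0 => /eqP; rewrite -f0 => /f_inj ->.
have := f1 X; rewrite ovP => /andP[-> _].
rewrite (reindex_onto f g); last first.
  move=> L /andP[HL pL]; apply: fg; rewrite ovP HL /=.
  apply: subset_trans (proper_sub pL) _.
  by have := f1 X; rewrite ovP => /andP[_ ->].
have -> : (\sum_(j : {set 'I_l} | (H \subset f j) && (f j \proper f X) && (g (f j) == j)) mobius H (f j)
   = \sum_(Y : {set 'I_l} | Y \proper X) (-1) ^+ #|Y| :> int)%R.
  apply: eq_big.
    move=> Y; rewrite gf eqxx andbT.
    have := f1 Y; rewrite ovP => /andP[-> _] /=.
    by rewrite !properE !f3.
  move=> Y /andP[/andP[_ pY] _]; apply: IH.
  rewrite properE !f3 -properE in pY.
  by have := proper_card pY; lia.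
have := alt_sum X0.
rewrite (bigD1 X) //= => e.
have -> : (\sum_(Y : {set 'I_l} | Y \proper X) (-1) ^+ #|Y| =
          \sum_(Y : {set 'I_l} | (Y \subset X) && (Y != X)) (-1) ^+ #|Y| :> int)%R.
  by apply: eq_bigl => Y; rewrite properEneq andbC.
by apply/eqP; rewrite eqr_oppLR -addr_eq0 addrC e.
Qed.

Lemma key_card (Y : {set 'I_l}) k : k \notin Y ->
  (#|f Y| * #|f [set k] : H| <= #|f (k |: Y)|)%N.
Proof.
move=> kY.
have BD : f Y \subset f (k |: Y) by rewrite f3 subsetUr.
have CD : f [set k] \subset f (k |: Y) by rewrite f3 subsetUl.
have HB : H \subset f Y by have := f1 Y; rewrite ovP => /andP[].
have HC : H \subset f [set k] by have := f1 [set k]; rewrite ovP => /andP[].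
have BG : f Y \subset G by have := f1 Y; rewrite ovP => /andP[].
have IO : (f Y :&: f [set k])%G \in overgroups H G.
  by rewrite ovP /= subsetI HB HC /= subIset // BG.
have [Z eZ] := f2 IO.
have ZY : Z \subset Y by rewrite -f3 eZ subsetIl.
have Zk : Z \subset [set k] by rewrite -f3 eZ subsetIr.
have Z0 : Z = set0.
  apply/eqP; rewrite -subset0; apply/subsetP => z zZ.
  have := subsetP ZY z zZ; have := subsetP Zk z zZ.
  by rewrite inE => /eqP ->; rewrite (negbTE kY).
have eI : f Y :&: f [set k] = H by have := congr1 val eZ; rewrite Z0 f0 /= => e; rewrite -e.
have m := mul_cardG (f Y) (f [set k]).
rewrite eI in m.
have lg := Lagrange HC.
have sc : (#|(f Y * f [set k])%g| <= #|f (k |: Y)|)%N.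
  by apply: subset_leq_card; apply: mul_subG.
have h0 : (0 < #|H|)%N := cardG_gt0 H.
rewrite -(@leq_pmul2r #|H|) //.
rewrite -mulnA [(_ * #|H|)%N]mulnC lg m leq_pmul2r //.
Qed.

Lemma key_index (Y : {set 'I_l}) k : k \notin Y ->
  (#|f [set k] : H| * #|G : f (k |: Y)| <= #|G : f Y|)%N.
Proof.
move=> kY.
have kc := key_card kY.
have BG : f Y \subset G by have := f1 Y; rewrite ovP => /andP[].
have DG : f (k |: Y) \subset G by have := f1 (k |: Y); rewrite ovP => /andP[].
have l1 := Lagrange BG; have l2 := Lagrange DG.
have b0 : (0 < #|f Y|)%N := cardG_gt0 _.
rewrite -(@leq_pmul2l #|f Y|) // l1 -l2 mulnA.
by rewrite leq_pmul2r ?indexg_gt0.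
Qed.

End Grp.
End GrpM.
Import GrpM.
Unset Implicit Arguments. Set Strict Implicit.
Import GRing.Theory Num.Theory.

Theorem lemma10p11 (gT : finGroupType) (G H : {group gT}) (l : nat)
    (A : 'I_l -> {group gT}) :
  (H \subset G)%g ->
  boolean_of_rank H G l ->
  injective A ->
  (forall K : {group gT}, is_atom H G K <-> exists i, A i = K) ->
  (forall i : 'I_l, 2 ^ i.+1 <= #|A i : H|%g)%N ->
  ((2 ^+ l : int) <= 2 * dual_totient H G)%R.
Proof.
move=> HG [f [f1 f2 f3]] Ainj Hatom Hidx.
have ex_tau : forall i, exists j, f [set j] = A i.
  move=> i.
  have [AO AH Amin] : is_atom H G (A i) by apply/Hatom; exists i.
  have [Y eY] := f2 _ AO.
  have Y0 : Y != set0.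
    by apply: contra AH => /eqP Y0; rewrite -eY Y0 (f0 HG f1 f2 f3).
  case/set0Pn: Y0 => j jY; exists j.
  apply: Amin => //.
  - by apply/negP => /eqP e; have := f_inj f3 (etrans e (esym (f0 HG f1 f2 f3))); move/setP/(_ j); rewrite !inE eqxx.
  - by rewrite -eY f3 sub1set.
pose tau i := odflt i [pick j | f [set j] == A i].
have ftau : forall i, f [set tau i] = A i.
  move=> i; rewrite /tau; case: pickP => [j /eqP //|none].
  by have [j ej] := ex_tau i; have := none j; rewrite ej eqxx.
have tau_inj : injective tau.
  by move=> i i' e; apply: Ainj; rewrite -!ftau e.
pose n (X : {set 'I_l}) : int := Posz #|G : f (tau @: X)|.
have n_ge1 : forall X, (1 <= n X)%R by move=> X; rewrite lez_nat indexg_gt0.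
have n_step : forall (X : {set 'I_l}) (j : 'I_l), j \notin X ->
    (2 ^+ j.+1 * n (j |: X) <= n X)%R.
  move=> X j jX.
  have tX : tau j \notin tau @: X by rewrite mem_imset.
  have := key_index HG f1 f2 f3 tX.
  rewrite ftau -imsetU1 => h.
  rewrite /n -Posz_exp2 -PoszM lez_nat.
  apply: leq_trans h; rewrite leq_mul2r; apply/orP; right; exact: Hidx.
have := comb_main n_ge1 n_step.
suff -> : dual_totient H G = (\sum_(X : {set 'I_l}) (-1) ^+ #|X| * n X)%R by [].
rewrite /dual_totient (reindex_onto f (g f)); last by move=> K /fg; apply.
rewrite (eq_bigl (fun _ => true)); last first.
  by move=> Y; rewrite f1 (gf f3) eqxx.
rewrite (reindex_inj (imset_inj tau_inj)) /=.
apply: eq_bigr => X _.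
by rewrite (mob_f HG f1 f2 f3) card_imset.
Qed.
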